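(* Let $d\in\mathbb{N}$ and $\mathcal{M}\subseteq\mathbb{N}_0^d$ with $\boldsymbol 0\notin\mathcal{M}$. Then $\min(\mathcal{M})=\min(P(\mathcal{M}))$. Consequently $\min(\mathcal{M})=\min(\mathcal{M}^i)$ for all $i\ge 0$, and $\min(\mathcal{M})=\min(\mathcal{M}^\infty)$ whenever the limit $\mathcal{M}^\infty$ exists.
   Context: For $d\in\mathbb{N}$ a game is a set $\mathcal{M}\subseteq\mathbb{N}_0^d$ of moves. From position $\boldsymbol x\in\mathbb{N}_0^d$ a player may move to $\boldsymbol y\in\mathbb{N}_0^d$ iff $\boldsymbol x-\boldsymbol y\in\mathcal{M}$. Misère play: a player who cannot move wins. If $\boldsymbol 0\in\mathcal{M}$, $P(\mathcal{M})=\varnothing$. Otherwise: a position is an N-position if it has no option or some option is a P-position; otherwise it is a P-position; $P(\mathcal{M})$ denotes the set of P-positions. The $\star$-operator is $\mathcal{M}^\star=P(\mathcal{M})$; $\mathcal{M}^0=\mathcal{M}$, $\mathcal{M}^i=(\mathcal{M}^{i-1})^\star$. The limit $\mathcal{M}^\infty$ exists if every $\boldsymbol x$ is eventually always in or eventually always outside $\mathcal{M}^i$, and then is the set of those eventually always in. $\mathbb{N}_0^d$ carries the componentwise partial order $\preceq$; $\min(S)$ denotes the set of minimal elements of $S$, with $\min(\varnothing)=\varnothing$. *)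

(* Defs.v *)
From mathcomp Require Import all_boot.
Set Implicit Arguments. Unset Strict Implicit. Unset Printing Implicit Defensive.

(* Positions in N_0^d : finite functions 'I_d -> nat (extensional equality). *)
Definition pos (d : nat) := {ffun 'I_d -> nat}.

Definition pset (d : nat) := pos d -> Prop.

Definition zero_pos (d : nat) : pos d := [ffun _ => 0].

Definition ple d (x y : pos d) : Prop := forall i, x i <= y i.

(* y is an option of x in the game M : x - y ∈ M (with y ∈ N_0^d, i.e. y ≼ x) *)
Definition is_option d (M : pset d) (x y : pos d) : Prop :=
  ple y x /\ M [ffun i => x i - y i].

(* Misère P/N positions, as mutually inductive predicates (the game graph is
   well-founded when 0 ∉ M, so this is the unique solution of the recursion). *)
Inductive Ppos d (M : pset d) : pos d -> Prop :=
| PposI x : (exists y, is_option M x y) ->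
            (forall y, is_option M x y -> Npos M y) -> Ppos M x
with Npos d (M : pset d) : pos d -> Prop :=
| Npos_none x : (forall y, ~ is_option M x y) -> Npos M x
| Npos_P x y : is_option M x y -> Ppos M y -> Npos M x.

Definition Pset d (M : pset d) : pset d :=
  fun x => ~ M (zero_pos d) /\ Ppos M x.

Fixpoint Miter d (M : pset d) (i : nat) : pset d :=
  match i with 0 => M | i.+1 => Pset (Miter M i) end.

Definition lim_exists d (M : pset d) : Prop :=
  forall x, (exists n, forall i, n <= i -> Miter M i x) \/
            (exists n, forall i, n <= i -> ~ Miter M i x).

Definition Minf d (M : pset d) : pset d :=
  fun x => exists n, forall i, n <= i -> Miter M i x.

Definition min_elts d (S : pset d) : pset d :=
  fun x => S x /\ forall y, S y -> ple y x -> y = x.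

(* Main.v *)
Require Import Defs.
From mathcomp Require Import all_boot.
From Stdlib Require Import Classical.
From mathcomp Require Import zify.
Set Implicit Arguments. Unset Strict Implicit.

Definition psum {d} (x : pos d) := (\sum_i x i)%N.

Lemma ple_sum d (z y : pos d) : ple z y -> z <> y -> psum z < psum y.
Proof.
move=> hle hne; rewrite /psum.
have e : (\sum_i y i = \sum_i z i + \sum_i (y i - z i))%N.
  rewrite -big_split /=; apply: eq_bigr => i _; have := hle i; lia.
rewrite e; suff : (\sum_i (y i - z i) != 0)%N by lia.
apply/negP; rewrite sum_nat_eq0 => /forallP H; apply: hne; apply/ffunP => i.
have := H i; rewrite /= => /eqP; have := hle i; lia.
Qed.

Lemma min_below d (S : pset d) y : S y -> exists m, min_elts S m /\ ple m y.
Proof.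
move: {2}(psum y) (leqnn (psum y)) => n; elim: n y => [|n IH] y hy Sy.
- exists y; split; last by move=> i.
  split=> // z Sz hz; apply: NNPP => hne; have := @ple_sum _ z y hz hne; lia.
- destruct (classic (exists z, S z /\ ple z y /\ z <> y)) as [[z [Sz [hz hne]]]|H].
  + have := @ple_sum _ z y hz hne => hlt.
    have [m [hm hmz]] := IH z ltac:(lia) Sz.
    exists m; split=> // i; exact: leq_trans (hmz i) (hz i).
  + exists y; split; last by move=> i.
    split=> // z Sz hz; apply: NNPP => hne; apply: H; by exists z.
Qed.

Lemma zero_noopt d (S : pset d) y : ~ S (zero_pos d) -> ~ is_option S (zero_pos d) y.
Proof.
move=> h0 [_ hS]; apply: h0.
have -> : zero_pos d = [ffun i => zero_pos d i - y i] by apply/ffunP => i; rewrite !ffunE.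
exact: hS.
Qed.

Lemma minP d (S : pset d) m : ~ S (zero_pos d) -> min_elts S m -> Ppos S m.
Proof.
move=> h0 [Sm hmin]; constructor.
- exists (zero_pos d); split; first by move=> i; rewrite ffunE.
  have -> : [ffun i => m i - zero_pos d i] = m by apply/ffunP => i; rewrite !ffunE subn0.
  exact: Sm.
- move=> y [hy hS].
  have e := hmin _ hS (fun i => ltac:(rewrite ffunE; apply: leq_subr)).
  have -> : y = zero_pos d.
    apply/ffunP => i; have := hy i; have := congr1 (fun f : pos d => f i) e.
    rewrite !ffunE /=; lia.
  apply: Npos_none => z; exact: zero_noopt.
Qed.

Lemma P_has d (S : pset d) x : Ppos S x -> exists m, S m /\ ple m x.
Proof.
case=> {}x [y [hy hS]] _; exists [ffun i => x i - y i]; split=> // i.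
rewrite ffunE; exact: leq_subr.
Qed.

Lemma core d (S : pset d) : ~ S (zero_pos d) ->
  forall x, min_elts S x <-> min_elts (Pset S) x.
Proof.
move=> h0 x; split.
- move=> hx; split; first by split=> //; exact: minP.
  move=> y [_ Py] hyx; have [m [Sm hmy]] := P_has Py.
  have hmx : ple m x by move=> i; exact: leq_trans (hmy i) (hyx i).
  have emx := (proj2 hx) _ Sm hmx.
  apply/ffunP => i; apply/eqP; rewrite eqn_leq hyx /=.
  by rewrite -emx; exact: hmy.
- move=> [[_ Px] hmin].
  have [m0 [Sm0 hm0]] := P_has Px.
  have [m [hm hmm0]] := min_below Sm0.
  have hmx : ple m x by move=> i; exact: leq_trans (hmm0 i) (hm0 i).
  have Pm : Pset S m by split=> //; exact: minP.
  have emx := hmin _ Pm hmx.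
  subst m; split; first exact: (proj1 hm).
  move=> y Sy hyx.
  have [m' [hm' hm'y]] := min_below Sy.
  have hm'x : ple m' x by move=> i; exact: leq_trans (hm'y i) (hyx i).
  have Pm' : Pset S m' by split=> //; exact: minP.
  have e := hmin _ Pm' hm'x; subst m'.
  apply/ffunP => i; apply/eqP; rewrite eqn_leq hyx /=; exact: hm'y.
Qed.

Lemma iter_facts d (M : pset d) (h0 : ~ M (zero_pos d)) i :
  ~ Miter M i (zero_pos d) /\ (forall x, min_elts M x <-> min_elts (Miter M i) x).
Proof.
elim: i => [|i [hz IH]] /=; first by split.
split.
- move=> [_ P0]; inversion P0 as [x0 [y hy] _]; exact: (zero_noopt hz hy).
- move=> x; rewrite IH; exact: core.
Qed.

Theorem lemma2 (d : nat) (hd : 0 < d) (M : pset d) (h0 : ~ M (zero_pos d)) :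
  (forall x, min_elts M x <-> min_elts (Pset M) x) /\
  (forall i, forall x, min_elts M x <-> min_elts (Miter M i) x) /\
  (lim_exists M -> forall x, min_elts M x <-> min_elts (Minf M) x).
Proof.
split; first exact: core.
split; first by move=> i; exact: (proj2 (iter_facts h0 i)).
move=> _ x; split.
- move=> hx; split.
  + exists 0 => i _; exact: (proj1 ((proj1 ((proj2 (iter_facts h0 i)) x)) hx)).
  + move=> y [n hn] hyx; have := (proj2 (iter_facts h0 n)) x.
    case=> /(_ hx) [_ H] _; exact: H _ (hn n (leqnn n)) hyx.
- move=> [[n hn] hmin].
  have [m [hm hmx]] := min_below (hn n (leqnn n)).
  have hmM := (proj2 ((proj2 (iter_facts h0 n)) m)) hm.
  have Im : Minf M m by exists 0 => i _; exact: (proj1 ((proj1 ((proj2 (iter_facts h0 i)) m)) hmM)).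
  have e := hmin _ Im hmx; subst m; exact: hmM.
Qed.
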